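(* For any $\lambda>0$ and $\alpha\in(0,1)$, $$\sum_{k=1}^{\infty}\frac{\lambda^{\alpha k-1}k^{1-\alpha}}{((k-1)!)^{\alpha}}\ge\sum_{k=0}^{\infty}\frac{\lambda^{\alpha k}}{(k!)^{\alpha}},$$ while for any $\lambda>0$ and $\alpha>1$, $$\sum_{k=1}^{\infty}\frac{\lambda^{\alpha k-1}k^{1-\alpha}}{((k-1)!)^{\alpha}}\le\sum_{k=0}^{\infty}\frac{\lambda^{\alpha k}}{(k!)^{\alpha}}.$$ *)

(* Defs.v *)
From Stdlib Require Import Reals.
From Coquelicot Require Import Coquelicot.
Open Scope R_scope.

(* Term of the left series, re-indexed: lhs_term n is the k = n+1 term
   lambda^(alpha k - 1) * k^(1-alpha) / ((k-1)!)^alpha. *)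
Definition lhs_term (lam alpha : R) (n : nat) : R :=
  Rpower lam (alpha * INR (S n) - 1) * Rpower (INR (S n)) (1 - alpha)
  / Rpower (INR (Factorial.fact n)) alpha.

Definition rhs_term (lam alpha : R) (k : nat) : R :=
  Rpower lam (alpha * INR k) / Rpower (INR (Factorial.fact k)) alpha.

(* Main.v *)
Require Import Defs.
From Stdlib Require Import Reals.
From Coquelicot Require Import Coquelicot.
From Stdlib Require Import Lra Psatz.
Open Scope R_scope.

Lemma exp_minus' (a b : R) : exp (a - b) = exp a / exp b.
Proof.
  unfold Rminus. rewrite exp_plus, exp_Ropp. unfold Rdiv. reflexivity.
Qed.

Lemma exp_le_exp' x y : x <= y -> exp x <= exp y.
Proof. intros [H|H]; [left; apply exp_increasing; exact H| right; subst; reflexivity]. Qed.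

Lemma lim_aux (c beta : R) : 0 < beta ->
  is_lim_seq (fun n => exp (c - beta * ln (INR n + 1))) 0.
Proof.
  intros Hb. apply is_lim_seq_spec. intros eps.
  destruct (INR_unbounded (exp ((c - ln eps) / beta))) as [N HN].
  exists N. intros n Hn.
  assert (HnN : INR N <= INR n) by (apply le_INR; lia).
  pose proof (pos_INR n).
  rewrite Rminus_0_r, Rabs_pos_eq; [|apply Rlt_le, exp_pos].
  rewrite <- (exp_ln eps) by apply cond_pos.
  apply exp_increasing.
  assert (H1 : (c - ln eps) / beta < ln (INR n + 1)).
  { rewrite <- (ln_exp ((c - ln eps) / beta)).
    apply ln_increasing; [apply exp_pos| lra]. }
  assert (H2 : c - ln eps < beta * ln (INR n + 1)).
  { apply (Rmult_lt_compat_l beta) in H1; [|lra].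
    replace (beta * ((c - ln eps) / beta)) with (c - ln eps) in H1 by (field; lra).
    exact H1. }
  lra.
Qed.

Lemma conv_aux (a : nat -> R) (c beta : R) : 0 < beta ->
  (forall n, 0 < a n) ->
  (forall n, a (S n) / a n <= exp (c - beta * ln (INR n + 1))) ->
  ex_series a.
Proof.
  intros Hb Hpos Hr.
  apply ex_series_Rabs.
  apply (ex_series_DAlembert a 0); [lra| intros n; specialize (Hpos n); lra|].
  apply (is_lim_seq_le_le (fun _ => 0) _ (fun n => exp (c - beta * ln (INR n + 1)))).
  - intros n. split; [apply Rabs_pos|].
    rewrite Rabs_pos_eq; [apply Hr|].
    apply Rlt_le, Rdiv_lt_0_compat; apply Hpos.
  - apply is_lim_seq_const.
  - apply lim_aux; exact Hb.
Qed.

Lemma key1 (al t : R) : 0 < al < 1 -> exp (al * t) <= al * exp t + (1 - al).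
Proof.
  intros H.
  assert (A : exp (al * t) * (1 + (1 - al) * t) <= exp t).
  { assert (Et : exp t = exp (al * t) * exp ((1 - al) * t)).
    { rewrite <- exp_plus. f_equal. ring. }
    rewrite Et. apply Rmult_le_compat_l; [apply Rlt_le, exp_pos| apply exp_ineq1_le]. }
  assert (B : exp (al * t) * (1 + - (al * t)) <= 1).
  { assert (Et : 1 = exp (al * t) * exp (- (al * t))).
    { rewrite <- exp_plus, <- exp_0. f_equal. ring. }
    rewrite Et at 2. apply Rmult_le_compat_l; [apply Rlt_le, exp_pos| apply exp_ineq1_le]. }
  nra.
Qed.

Lemma key2 (al t : R) : 1 < al -> al * exp t <= exp (al * t) + (al - 1).
Proof.
  intros H.
  assert (A : exp t * (1 + (al - 1) * t) <= exp (al * t)).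
  { assert (Et : exp (al * t) = exp t * exp ((al - 1) * t)).
    { rewrite <- exp_plus. f_equal. ring. }
    rewrite Et. apply Rmult_le_compat_l; [apply Rlt_le, exp_pos| apply exp_ineq1_le]. }
  assert (B : exp t * (1 + - t) <= 1).
  { assert (Et : 1 = exp t * exp (- t)).
    { rewrite <- exp_plus, <- exp_0. f_equal. ring. }
    rewrite Et at 2. apply Rmult_le_compat_l; [apply Rlt_le, exp_pos| apply exp_ineq1_le]. }
  nra.
Qed.

Definition yy (lam : R) (k : nat) : R := INR k * ln lam - ln (INR (Factorial.fact k)).

Lemma yy_S (lam : R) (k : nat) : yy lam (S k) = yy lam k + ln lam - ln (INR k + 1).
Proof.
  unfold yy. rewrite S_INR.
  change (Factorial.fact (S k)) with (S k * Factorial.fact k)%nat.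
  rewrite mult_INR, S_INR, ln_mult; [ring| |apply INR_fact_lt_0].
  pose proof (pos_INR k); lra.
Qed.

Lemma rhs_eq lam al k : rhs_term lam al k = exp (al * yy lam k).
Proof.
  unfold rhs_term, Rpower, yy. rewrite <- exp_minus'. f_equal. ring.
Qed.

Lemma lhs_eq lam al n : lhs_term lam al n = exp (yy lam n + (al - 1) * yy lam (S n)).
Proof.
  rewrite yy_S. unfold lhs_term, Rpower, yy. rewrite S_INR.
  rewrite <- exp_plus, <- exp_minus'. f_equal. ring.
Qed.

Lemma ratio_r lam al k : rhs_term lam al (S k) / rhs_term lam al k
   = exp (al * ln lam - al * ln (INR k + 1)).
Proof.
  rewrite !rhs_eq, yy_S, <- exp_minus'. f_equal. ring.
Qed.

Lemma ratio_l lam al n : lhs_term lam al (S n) / lhs_term lam al n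
   = exp (al * ln lam - ln (INR n + 1) - (al - 1) * ln (INR n + 2)).
Proof.
  rewrite !lhs_eq. rewrite (yy_S lam (S n)), (yy_S lam n), <- exp_minus'.
  rewrite S_INR. f_equal. replace (INR n + 1 + 1) with (INR n + 2) by ring. ring.
Qed.

Lemma rhs_pos lam al k : 0 < rhs_term lam al k.
Proof. rewrite rhs_eq; apply exp_pos. Qed.
Lemma lhs_pos lam al k : 0 < lhs_term lam al k.
Proof. rewrite lhs_eq; apply exp_pos. Qed.

Lemma ex_rhs lam al : 0 < al -> ex_series (rhs_term lam al).
Proof.
  intros Ha. apply (conv_aux _ (al * ln lam) al Ha (rhs_pos lam al)).
  intros n. rewrite ratio_r. right. f_equal.
Qed.

Lemma ln_n12 n : ln (INR n + 1) <= ln (INR n + 2) <= ln 2 + ln (INR n + 1).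
Proof.
  pose proof (pos_INR n). split.
  - apply ln_le; lra.
  - rewrite <- ln_mult by lra. apply ln_le; lra.
Qed.

Lemma ex_lhs lam al : 0 < al -> al <> 1 -> ex_series (lhs_term lam al).
Proof.
  intros Ha H1. destruct (Rlt_or_le al 1) as [Hl|Hg].
  - apply (conv_aux _ (al * ln lam + (1 - al) * ln 2) al Ha (lhs_pos lam al)).
    intros n. rewrite ratio_l. apply Rlt_le in Hl. destruct (ln_n12 n).
    destruct Hl as [Hl|Hl]; [|subst; lra].
    apply exp_le_exp'. nra.
  - apply (conv_aux _ (al * ln lam) al Ha (lhs_pos lam al)).
    intros n. rewrite ratio_l. destruct (ln_n12 n).
    assert (1 < al) by lra.
    apply exp_le_exp'. nra.
Qed.

Lemma series_le_gen (a b : nat -> R) la lb :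
  (forall n, a n <= b n) -> is_series a la -> is_series b lb -> la <= lb.
Proof.
  intros H Ha Hb.
  assert (Hd : is_series (fun n => b n - a n) (lb - la)).
  { apply (is_series_minus b a lb la Hb Ha). }
  assert (0 <= Series (fun n => b n - a n)).
  { assert (Z : Series (fun _ : nat => 0 * 1) = 0).
    { rewrite Series_scal_l. ring. }
    rewrite <- Z. apply Series_le.
    - intros n. specialize (H n). lra.
    - exists (lb - la); exact Hd. }
  rewrite (is_series_unique _ _ Hd) in H0. lra.
Qed.

Theorem lemma2 :
  (forall lam alpha : R, 0 < lam -> 0 < alpha < 1 ->
     exists S1 S2 : R,
       is_series (lhs_term lam alpha) S1 /\ is_series (rhs_term lam alpha) S2 /\
       S1 >= S2) /\
  (forall lam alpha : R, 0 < lam -> 1 < alpha ->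
     exists S1 S2 : R,
       is_series (lhs_term lam alpha) S1 /\ is_series (rhs_term lam alpha) S2 /\
       S1 <= S2).
Proof.
  split.
  - intros lam al Hlam Hal.
    assert (E1 : is_series (lhs_term lam al) (Series (lhs_term lam al)))
      by (apply Series_correct, ex_lhs; lra).
    assert (E2 : is_series (rhs_term lam al) (Series (rhs_term lam al)))
      by (apply Series_correct, ex_rhs; lra).
    set (S1 := Series (lhs_term lam al)) in *.
    set (S2 := Series (rhs_term lam al)) in *.
    exists S1, S2. split; [exact E1|split; [exact E2|]].
    assert (E3 : is_series (fun k => rhs_term lam al (S k)) (S2 - rhs_term lam al 0)).
    { apply is_series_incr_1. 
      assert (Q : S2 = S2 - rhs_term lam al 0 + rhs_term lam al 0) by ring.
      rewrite Q in E2. exact E2. }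
    assert (E4 := is_series_plus _ _ _ _ E2 (is_series_scal_l (al - 1) _ _ E3)).
    assert (E5 := is_series_scal_l al _ _ E1).
    assert (PW : forall n:nat, plus (rhs_term lam al n) (scal (al - 1) (rhs_term lam al (S n))) <= scal al (lhs_term lam al n)).
    2: assert (Hle := series_le_gen _ _ _ _ PW E4 E5).
    { intros n. unfold plus, scal; simpl. unfold mult; simpl.
        rewrite !rhs_eq, lhs_eq. set (u := yy lam n). set (v := yy lam (S n)).
        pose proof (key1 al (u - v) Hal).
        replace (al * u) with (al * v + al * (u - v)) by ring.
        replace (u + (al - 1) * v) with (al * v + (u - v)) by ring.
        rewrite !exp_plus. pose proof (exp_pos (al * v)). nra. }
    unfold plus, scal in Hle; simpl in Hle; unfold mult in Hle; simpl in Hle.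
    pose proof (rhs_pos lam al 0). nra.
  - intros lam al Hlam Hal.
    assert (E1 : is_series (lhs_term lam al) (Series (lhs_term lam al)))
      by (apply Series_correct, ex_lhs; lra).
    assert (E2 : is_series (rhs_term lam al) (Series (rhs_term lam al)))
      by (apply Series_correct, ex_rhs; lra).
    set (S1 := Series (lhs_term lam al)) in *.
    set (S2 := Series (rhs_term lam al)) in *.
    exists S1, S2. split; [exact E1|split; [exact E2|]].
    assert (E3 : is_series (fun k => rhs_term lam al (S k)) (S2 - rhs_term lam al 0)).
    { apply is_series_incr_1. 
      assert (Q : S2 = S2 - rhs_term lam al 0 + rhs_term lam al 0) by ring.
      rewrite Q in E2. exact E2. }
    assert (E4 := is_series_plus _ _ _ _ E2 (is_series_scal_l (al - 1) _ _ E3)).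
    assert (E5 := is_series_scal_l al _ _ E1).
    assert (PW : forall n:nat, scal al (lhs_term lam al n) <= plus (rhs_term lam al n) (scal (al - 1) (rhs_term lam al (S n)))).
    2: assert (Hle := series_le_gen _ _ _ _ PW E5 E4).
    { intros n. unfold plus, scal; simpl. unfold mult; simpl.
        rewrite !rhs_eq, lhs_eq. set (u := yy lam n). set (v := yy lam (S n)).
        pose proof (key2 al (u - v) Hal).
        replace (al * u) with (al * v + al * (u - v)) by ring.
        replace (u + (al - 1) * v) with (al * v + (u - v)) by ring.
        rewrite !exp_plus. pose proof (exp_pos (al * v)). nra. }
    unfold plus, scal in Hle; simpl in Hle; unfold mult in Hle; simpl in Hle.
    pose proof (rhs_pos lam al 0). nra.
Qed.
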